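(* For each $n\ge1$ there is a bijection $\psi$ from the set of plane trees with $n$ edges to $\mathfrak S_n(132)$ such that, for every such tree $T$ and $\pi=\psi(T)$: (1) the number of young leaves of $T$ equals the number of double descents of the permutation $(n+1)\pi=(n+1,\pi_1,\dots,\pi_n)$; (2) the number of old leaves of $T$ equals the number of ascending runs of the permutation $\pi(n+1)=(\pi_1,\dots,\pi_n,n+1)$.
   Context: A plane tree is a rooted tree in which the children of each vertex are linearly ordered. A leaf is a vertex with no children; the one-vertex tree has no leaves. A leaf is old if it is the leftmost child of its parent, young otherwise. $\mathfrak S_n(132)$ is the set of permutations of $\{1,\dots,n\}$ with no indices $a<b<c$ such that $\pi_a<\pi_c<\pi_b$. For a sequence $\sigma$, a double descent is an index $i$ with $\sigma_i>\sigma_{i+1}>\sigma_{i+2}$, a double ascent is an index $i$ with $\sigma_i<\sigma_{i+1}<\sigma_{i+2}$, and an ascending run is a maximal increasing sequence $\sigma_i<\sigma_{i+1}<\cdots<\sigma_{i+k}$ of consecutive entries with $k\ge1$. *)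

(* Defs.v *)
From mathcomp Require Import all_boot all_fingroup.
Set Implicit Arguments. Unset Strict Implicit. Unset Printing Implicit Defensive.

Inductive ptree : Type := Node : seq ptree -> ptree.

Definition is_leaf (t : ptree) : bool := if t is Node [::] then true else false.

Fixpoint edges (t : ptree) : nat :=
  let: Node ts := t in
  (fix f (l : seq ptree) : nat :=
     if l is u :: l' then (edges u).+1 + f l' else 0) ts.

(* old leaves: leaves that are the leftmost child of their parent *)
Fixpoint old_leaves (t : ptree) : nat :=
  let: Node ts := t in
  (if ts is u :: _ then is_leaf u else false) +
  (fix f (l : seq ptree) : nat :=
     if l is u :: l' then old_leaves u + f l' else 0) ts.

(* young leaves: leaves that are not the leftmost child of their parent *)
Fixpoint young_leaves (t : ptree) : nat :=
  let: Node ts := t in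
  count is_leaf (behead ts) +
  (fix f (l : seq ptree) : nat :=
     if l is u :: l' then young_leaves u + f l' else 0) ts.

Definition avoids132 n (p : 'S_n) : bool :=
  ~~ [exists a : 'I_n, exists b : 'I_n, exists c : 'I_n,
        [&& a < b, b < c, p a < p c & p c < p b]].

(* one-line notation pi_1 ... pi_n with values in {1..n} *)
Definition oneline n (p : 'S_n) : seq nat := [seq (p i : nat).+1 | i <- enum 'I_n].

Definition ddes (s : seq nat) : nat :=
  count (fun i => (nth 0 s i > nth 0 s i.+1) && (nth 0 s i.+1 > nth 0 s i.+2))
        (iota 0 (size s - 2)).

(* number of ascending runs: maximal increasing runs of consecutive entries
   of length >= 2, counted by their starting index i: s_i < s_(i+1) and
   (i = 0 or s_(i-1) >= s_i) *)
Definition asc_runs (s : seq nat) : nat :=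
  count (fun i => (nth 0 s i < nth 0 s i.+1) &&
                  ((i == 0) || (nth 0 s i.-1 >= nth 0 s i)))
        (iota 0 (size s).-1).

(* Main.v *)
Require Import Defs.
From mathcomp Require Import all_boot all_fingroup.
From mathcomp Require Import zify.
From Stdlib Require Import Lia.
Set Implicit Arguments. Unset Strict Implicit. Unset Printing Implicit Defensive.

Fixpoint dd (s : seq nat) : nat :=
  match s with
  | x :: ((y :: z :: _) as t) => ((x > y) && (y > z)) + dd t
  | _ => 0
  end.

Lemma dd_cons3 x y z t : dd [:: x, y, z & t] = ((x > y) && (y > z)) + dd [:: y, z & t].
Proof. by []. Qed.

Lemma ddes_drop (u : seq nat) k :
  dd (drop k u) = count (fun i => (nth 0 u i > nth 0 u i.+1) && (nth 0 u i.+1 > nth 0 u i.+2))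
        (iota k (size u - 2 - k)).
Proof.
move Hm: (size u - k) => m; elim: m k Hm => [|m IH] k Hm.
  have -> : size u - 2 - k = 0 by lia.
  by rewrite drop_oversize //; lia.
have Hk : k < size u by lia.
rewrite (drop_nth 0 Hk).
case Hk1 : (k.+1 < size u); last first.
  have -> : size u - 2 - k = 0 by lia.
  by rewrite drop_oversize //= ; lia.
rewrite (drop_nth 0 Hk1).
case Hk2 : (k.+2 < size u); last first.
  have -> : size u - 2 - k = 0 by lia.
  by rewrite drop_oversize //= ; lia.
rewrite (drop_nth 0 Hk2) dd_cons3 -(drop_nth 0 Hk2) -(drop_nth 0 Hk1) IH; last by lia.
have -> : size u - 2 - k = (size u - 2 - k.+1).+1 by lia.
by [].
Qed.

Lemma ddesE s : ddes s = dd s.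
Proof. by rewrite /ddes -(subn0 (size s - 2)) -(ddes_drop s 0) drop0. Qed.

Fixpoint ar2 (p : option nat) (s : seq nat) : nat :=
  match s with
  | x :: ((y :: _) as t) =>
      ((x < y) && (if p is Some w then w >= x else true)) + ar2 (Some x) t
  | _ => 0
  end.

Lemma ar_drop (u : seq nat) k :
  ar2 (if k is k'.+1 then Some (nth 0 u k') else None) (drop k u) =
  count (fun i => (nth 0 u i < nth 0 u i.+1) &&
                  ((i == 0) || (nth 0 u i.-1 >= nth 0 u i)))
        (iota k ((size u).-1 - k)).
Proof.
move Hm: (size u - k) => m; elim: m k Hm => [|m IH] k Hm.
  have -> : (size u).-1 - k = 0 by lia.
  rewrite drop_oversize; last lia. by case: k {Hm}.
have Hk : k < size u by lia.
rewrite (drop_nth 0 Hk).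
case Hk1 : (k.+1 < size u); last first.
  have -> : (size u).-1 - k = 0 by lia.
  rewrite (drop_oversize (n:=k.+1)); last lia. by case: k {Hm Hk Hk1}.
rewrite (drop_nth 0 Hk1).
have -> : (size u).-1 - k = ((size u).-1 - k.+1).+1 by lia.
rewrite /= -IH; last by lia.
rewrite (drop_nth 0 Hk1). by case: k {Hm Hk Hk1}.
Qed.

Lemma asc_runsE s : asc_runs s = ar2 None s.
Proof. by rewrite /asc_runs -(subn0 (size s).-1) -(ar_drop s 0) drop0. Qed.

Lemma dd_cons2 x y w : dd [:: x, y & w] =
  ((x > y) && (if w is z :: _ then y > z else false)) + dd (y :: w).
Proof. by case: w => [|z t] //=; rewrite andbF. Qed.

Lemma dd_map b s : dd (map (addn b) s) = dd s.
Proof.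
elim: s => [|x s IH] //; case: s IH => [|y w] // IH.
rewrite map_cons map_cons dd_cons2 [in RHS]dd_cons2 -map_cons IH ltn_add2l.
by case: w {IH}=> [|z w] //=; rewrite ltn_add2l.
Qed.

Lemma dd_cat_asc x u y v : last x u < y ->
  dd ((x :: u) ++ y :: v) = dd (x :: u) + dd (y :: v).
Proof.
elim: u x => [|x2 u IH] x H; rewrite /= in H.
  by rewrite cat_cons cat0s dd_cons2 (leq_gtF (ltnW H)).
rewrite !cat_cons dd_cons2 -cat_cons IH // [dd [:: x, x2 & u]]dd_cons2 addnA; congr (_ + _ + _).
case: u {IH} H => [|a u] H //=; by rewrite (leq_gtF (ltnW H)) !andbF.
Qed.

Lemma ar2_cons2 p x y w : ar2 p [:: x, y & w] =
  ((x < y) && (if p is Some w then w >= x else true)) + ar2 (Some x) (y :: w).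
Proof. by []. Qed.

Lemma ar2_some_ge x y v : y <= x -> ar2 (Some x) (y :: v) = ar2 None (y :: v).
Proof. by case: v => //= z v ->. Qed.

Lemma ar2_map b p s : ar2 (omap (addn b) p) (map (addn b) s) = ar2 p s.
Proof.
elim: s p => [|x s IH] p //; case: s IH => [|y w] // IH.
rewrite map_cons map_cons ar2_cons2 ar2_cons2 -map_cons.
rewrite (IH (Some x)) ltn_add2l; by case: p => // q /=; rewrite leq_add2l.
Qed.

Lemma ar2_cat_desc p x u y v : y <= last x u ->
  ar2 p ((x :: u) ++ y :: v) = ar2 p (x :: u) + ar2 None (y :: v).
Proof.
elim: u x p => [|x2 u IH] x p H; rewrite /= in H.
  by rewrite cat_cons cat0s ar2_cons2 ltnNge H -(ar2_some_ge v H).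
by rewrite !cat_cons ar2_cons2 -cat_cons IH // [ar2 p [:: x, x2 & u]]ar2_cons2 addnA.
Qed.

Lemma ar2_tail3 p u x y z : x < y -> y < z ->
  ar2 p (u ++ [:: x; y; z]) = ar2 p (u ++ [:: x; y]).
Proof.
move=> Hxy Hyz.
elim: u p => [|w u IH] p.
  by rewrite /= (leqNgt y x) Hxy andbF.
case: u IH => [|a u] IH; first by rewrite /= (leqNgt y x) Hxy andbF.
by rewrite !cat_cons !ar2_cons2 -!cat_cons IH.
Qed.

Lemma edgesE ts : edges (Node ts) = sumn (map (fun u => (edges u).+1) ts).
Proof. by elim: ts => //= u ts ->. Qed.
Lemma youngE ts : young_leaves (Node ts) = count is_leaf (behead ts) + sumn (map young_leaves ts).
Proof. rewrite /=; congr (_ + _); by elim: ts => //= u ts ->. Qed.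
Lemma oldE ts : old_leaves (Node ts) = (if ts is u :: _ then is_leaf u else false) + sumn (map old_leaves ts).
Proof. rewrite /=; congr (_ + _); by elim: ts => //= u ts ->. Qed.

Lemma sumn_rcons s x : sumn (rcons s x) = sumn s + x.
Proof. by rewrite -cats1 sumn_cat /= addn0. Qed.

Lemma edges_rcons ts S : edges (Node (rcons ts S)) = (edges (Node ts) + edges S).+1.
Proof. by rewrite !edgesE map_rcons sumn_rcons addnS. Qed.

Lemma young_rcons ts S : young_leaves (Node (rcons ts S)) =
  young_leaves (Node ts) + young_leaves S + ((0 < size ts) && is_leaf S).
Proof.
rewrite !youngE map_rcons sumn_rcons.
case: ts => [|t ts] /=; first by rewrite add0n addn0.
rewrite -cats1 count_cat /= addn0; lia.
Qed.

Lemma old_rcons ts S : old_leaves (Node (rcons ts S)) =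
  old_leaves (Node ts) + old_leaves S + ((size ts == 0) && is_leaf S).
Proof.
rewrite !oldE map_rcons sumn_rcons.
case: ts => [|t ts] /=; lia.
Qed.

Lemma is_leafE S : is_leaf S = (edges S == 0).
Proof. by case: S => [[|t ts]]. Qed.

Lemma edges0 T : edges T = 0 -> T = Node [::].
Proof. by case: T => [[|t ts]]. Qed.

Lemma ptree_ind2 (P : ptree -> Prop) : P (Node [::]) ->
  (forall ts S, P (Node ts) -> P S -> P (Node (rcons ts S))) -> forall T, P T.
Proof.
move=> H0 HS T; move Hm: (edges T) => m.
elim: m {-2}m (leqnn m) T Hm => [|m IH] k Hk [ts] Hm.
  have -> : ts = [::] by case: ts Hm => // t ts; rewrite edgesE /=; lia.
  done.
case/lastP: ts Hm => [|ts S] Hm //.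
rewrite edges_rcons in Hm.
apply: HS; [apply: (IH (edges (Node ts))) | apply: (IH (edges S))] => //; lia.
Qed.

Fixpoint Ff (k : nat) (T : ptree) : seq nat :=
  if k is k'.+1 then
    let: Node ts := T in
    match rev ts with
    | [::] => [::]
    | u :: rts => map (addn (edges (Node (rev rts)))) (Ff k' u) ++
                  (edges T) :: Ff k' (Node (rev rts))
    end
  else [::].

Definition FT T := Ff (edges T).+1 T.

Lemma Ff_rcons k ts u : Ff k.+1 (Node (rcons ts u)) =
  map (addn (edges (Node ts))) (Ff k u) ++ edges (Node (rcons ts u)) :: Ff k (Node ts).
Proof. rewrite [in LHS]/= rev_rcons revK. done. Qed.

Lemma Ff_fuel k k' T : edges T < k -> edges T < k' -> Ff k T = Ff k' T.
Proof.
elim: k k' T => [|k IH] [|k'] [ts] //.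
case/lastP: ts => [|ts S] //.
rewrite !Ff_rcons edges_rcons => H H'.
rewrite (IH k' S) ?(IH k' (Node ts)) //; lia.
Qed.

Lemma FT_nil : FT (Node [::]) = [::].
Proof. by []. Qed.

Lemma FT_rcons ts S : FT (Node (rcons ts S)) =
  map (addn (edges (Node ts))) (FT S) ++ (edges (Node (rcons ts S))) :: FT (Node ts).
Proof.
rewrite /FT {1}edges_rcons Ff_rcons -edges_rcons.
rewrite (Ff_fuel (k' := (edges S).+1) (T := S)) ?(Ff_fuel (k := edges (Node (rcons ts S))) (k' := (edges (Node ts)).+1));
  rewrite ?edges_rcons //; lia.
Qed.

Lemma size_pos ts : (0 < size ts) = (0 < edges (Node ts)).
Proof. by case: ts. Qed.

Lemma FT_perm T : perm_eq (FT T) (iota 1 (edges T)).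
Proof.
elim/ptree_ind2: T => [|ts S IHT IHS] //.
rewrite FT_rcons edges_rcons.
set b := edges (Node ts); set a := edges S.
have -> : iota 1 (b + a).+1 = iota 1 b ++ map (addn b) (iota 1 a) ++ [:: (b+a).+1].
  rewrite -[(b+a).+1]addn1 iotaD iotaD -iotaDl -catA.
  congr (_ ++ (_ ++ _)); by rewrite /= addnC.
rewrite catA cats1 perm_sym perm_rcons perm_sym perm_catC cat_cons perm_cons.
apply: perm_cat => //; by rewrite perm_map.
Qed.

Lemma size_FT T : size (FT T) = edges T.
Proof. by rewrite (perm_size (FT_perm T)) size_iota. Qed.

Lemma mem_FT T x : x \in FT T -> 0 < x <= edges T.
Proof. by rewrite (perm_mem (FT_perm T)) mem_iota add1n ltnS. Qed.

Lemma edges_leaf T : edges T = 0 -> FT T = [::].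
Proof. by move/edges0 ->. Qed.

Lemma FT_young T N : edges T < N -> young_leaves T = dd (N :: FT T).
Proof.
elim/ptree_ind2: T N => [|ts S IHT IHS] N //.
rewrite edges_rcons => HN.
rewrite young_rcons FT_rcons edges_rcons.
case Ha: (edges S) => [|a'].
  rewrite (edges0 Ha) FT_nil [map _ [::]]/= cat0s dd_cons2 -(IHT (edges (Node ts) + 0).+1); last lia.
  rewrite size_pos [young_leaves (Node [::])]/= [is_leaf (Node [::])]/= andbT !addn0.
  have -> : (edges (Node ts)).+1 < N by lia.
  case HF: (FT (Node ts)) => [|z w].
    by have := size_FT (Node ts); rewrite HF => <-; rewrite andbF addnC.
  have := mem_FT (T:=Node ts) (x:=z); rewrite HF inE eqxx => /(_ isT) Hz.
  have -> : 0 < edges (Node ts) by lia.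
  have -> : z < (edges (Node ts)).+1 by lia.
  by rewrite addnC.
case HF: (FT S) => [|x u].
  by have := size_FT S; rewrite HF Ha.
rewrite -cat_cons dd_cat_asc; last first.
  change (last (edges (Node ts) + x) (map (addn (edges (Node ts))) u) < (edges (Node ts) + a'.+1).+1).
  have : last (edges (Node ts) + x) (map (addn (edges (Node ts))) u) \in map (addn (edges (Node ts))) (x :: u) by exact: mem_last.
  case/mapP => y Hy ->; have := mem_FT (T:=S) (x:=y); rewrite HF Hy Ha => /(_ isT); lia.
rewrite -IHT; last lia.
have -> : N :: edges (Node ts) + x :: map (addn (edges (Node ts))) u = map (addn (edges (Node ts))) ((N - edges (Node ts)) :: FT S).
  rewrite HF map_cons subnKC; [by [] | lia].
rewrite dd_map -IHS; last lia.
by rewrite is_leafE Ha andbF addn0 addnC.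
Qed.

Lemma ar2_mapN b s : ar2 None (map (addn b) s) = ar2 None s.
Proof. exact: (ar2_map b None s). Qed.

Lemma FT_old T N : edges T < N -> old_leaves T = ar2 None (rcons (FT T) N).
Proof.
elim/ptree_ind2: T N => [|ts S IHT IHS] N //.
rewrite edges_rcons => HN.
rewrite old_rcons FT_rcons edges_rcons rcons_cat rcons_cons.
case Hb: (edges (Node ts)) => [|b'].
  case: (edges0 Hb) => Hts; rewrite Hts FT_nil [old_leaves (Node [::])]/= add0n.
  rewrite (eq_map add0n) map_id add0n.
  case Ha: (edges S) => [|a'].
    rewrite (edges0 Ha) FT_nil cat0s. have H1 : 1 < N by lia. by rewrite /= H1.
  rewrite is_leafE Ha andbF addn0 (IHS a'.+2); last lia.
  case/lastP HF: (FT S) => [|u x].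
    by have := size_FT S; rewrite HF Ha.
  have Hx : x <= a'.+1.
    by have := mem_FT (T:=S) (x:=x); rewrite HF mem_rcons inE eqxx Ha => /(_ isT) /andP[].
  rewrite cat_rcons ar2_tail3; [|lia|lia].
  by rewrite -!cats1 -catA.
have Hts : (size ts == 0) = false by apply/negbTE; rewrite -lt0n size_pos Hb.
rewrite Hts andFb addn0.
case HT: (FT (Node ts)) => [|z w].
  by have := size_FT (Node ts); rewrite HT Hb.
have Hz : z <= b'.+1.
  by have := mem_FT (T:=Node ts) (x:=z); rewrite HT inE eqxx Hb => /(_ isT) /andP[].
rewrite -HT (IHT N); last lia.
rewrite HT rcons_cons.
case Ha: (edges S) => [|a'].
  rewrite (edges0 Ha) FT_nil [old_leaves (Node [::])]/= addn0 cat0s.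
  rewrite (_ : (b'.+1 + 0).+1 :: z :: rcons w N = [:: (b'.+1 + 0).+1] ++ z :: rcons w N) //.
  rewrite ar2_cat_desc /=; lia.
case HF: (FT S) => [|x u].
  by have := size_FT S; rewrite HF Ha.
rewrite -cat_rcons map_cons rcons_cons ar2_cat_desc; last by rewrite last_rcons; lia.
rewrite addnC; congr (_ + _); rewrite (IHS a'.+2); last lia.
rewrite HF (_ : (b'.+1 + a'.+1).+1 = b'.+1 + a'.+2); last lia.
by rewrite -rcons_cons -(map_cons (addn b'.+1)) -map_rcons ar2_mapN.
Qed.

Lemma mem_nth' (s : seq nat) n : n < size s -> nth 0 s n \in s.
Proof. exact: mem_nth. Qed.

Definition av132 (s : seq nat) := forall a b c, a < b -> b < c -> c < size s ->
  ~~ ((nth 0 s a < nth 0 s c) && (nth 0 s c < nth 0 s b)).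

Lemma av_map b s : av132 (map (addn b) s) <-> av132 s.
Proof.
have E i : i < size s -> nth 0 (map (addn b) s) i = b + nth 0 s i.
  by move=> hi; rewrite (nth_map 0 0).
split => H a b' c hab hbc hc.
  have := H a b' c hab hbc; rewrite size_map => /(_ hc).
  by rewrite !E ?ltn_add2l //; lia.
rewrite size_map in hc.
rewrite !E ?ltn_add2l; try lia. exact: H.
Qed.

Lemma nth_mB (m : nat) (B : seq nat) i k : k < i -> nth 0 (m :: B) (i - k) = nth 0 B (i - k.+1).
Proof. by move=> h; have -> : i - k = (i - k.+1).+1 by lia. Qed.

Lemma av_cat (A : seq nat) m (B : seq nat) :
  (forall x y, x \in A -> y \in B -> y < x) ->
  (forall x, x \in A -> x < m) -> (forall y, y \in B -> y < m) ->
  av132 A -> av132 B -> av132 (A ++ m :: B).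
Proof.
move=> HAB HA HB avA avB a b c hab hbc hc.
rewrite size_cat /= in hc.
rewrite !nth_cat.
case: (ltnP c (size A)) => hck.
  rewrite (ltn_trans hab (ltn_trans hbc hck)) (ltn_trans hbc hck); exact: avA.
case: (ltnP a (size A)) => hak.
  have Ha := HA _ (mem_nth 0 hak).
  case: (ltnP (size A) c) => hkc.
    rewrite (nth_mB _ _ hkc).
    have Hc : nth 0 B (c - (size A).+1) \in B by apply: mem_nth'; lia.
    by rewrite ltnNge (ltnW (HAB _ _ (mem_nth 0 hak) Hc)).
  have -> : c - size A = 0 by lia.
  have hb : b < size A by lia.
  by rewrite hb /= [m < _]ltnNge (ltnW (HA _ (mem_nth 0 hb))) andbF.
have hb : ~~ (b < size A) by rewrite -leqNgt; lia.
have hc' : ~~ (c < size A) by rewrite -leqNgt; lia.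
rewrite (negbTE hb) !(nth_mB _ _ (leq_ltn_trans hak hab)) // ?(nth_mB _ _ (leq_ltn_trans hak (ltn_trans hab hbc))) //.
case: (ltnP (size A) a) => hka.
  rewrite (nth_mB _ _ hka); apply: avB; lia.
have -> : a - size A = 0 by lia.
have Hc : nth 0 B (c - (size A).+1) \in B by apply: mem_nth'; lia.
by rewrite /= ltnNge (ltnW (HB _ Hc)).
Qed.

Lemma nth_catB (A : seq nat) m (B : seq nat) i :
  nth 0 (A ++ m :: B) (i + (size A).+1) = nth 0 B i.
Proof.
rewrite nth_cat (_ : (i + (size A).+1 < size A) = false); last by apply/negbTE; rewrite -leqNgt; lia.
by rewrite (_ : i + (size A).+1 - size A = i.+1) //; lia.
Qed.

Lemma av_catE (A : seq nat) m (B : seq nat) : av132 (A ++ m :: B) -> av132 A /\ av132 B.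
Proof.
move=> H; split => a b c hab hbc hc.
  have := H a b c hab hbc; rewrite size_cat ltn_addr // => /(_ isT).
  by rewrite !nth_cat hc (ltn_trans hab (ltn_trans hbc hc)) (ltn_trans hbc hc).
have := H (a + (size A).+1) (b + (size A).+1) (c + (size A).+1).
rewrite !ltn_add2r size_cat /= => /(_ hab hbc).
have -> : c + (size A).+1 < size A + (size B).+1 by lia.
by move/(_ isT); rewrite !nth_catB.
Qed.

Lemma av_split (A : seq nat) m (B : seq nat) : uniq (A ++ m :: B) -> (forall z, z \in A ++ B -> z < m) ->
  av132 (A ++ m :: B) -> forall x y, x \in A -> y \in B -> y < x.
Proof.
move=> U HA H x y hx hy.
have hxy : x != y.
  apply/eqP => exy; move: U; rewrite cat_uniq => /and3P[_ /hasPn /(_ y)] .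
  by rewrite inE hy orbT -exy hx => /(_ isT).
rewrite ltn_neqAle eq_sym hxy /=; rewrite leqNgt; apply/negP => lt.
have hi : index x A < size A by rewrite index_mem.
have hj : index y B < size B by rewrite index_mem.
have h2 : size A < index y B + (size A).+1 by lia.
have h3 : index y B + (size A).+1 < size (A ++ m :: B) by rewrite size_cat /=; lia.
have := H _ _ _ hi h2 h3.
rewrite nth_catB !nth_cat hi ltnn subnn /= !nth_index //.
by rewrite lt (HA y _) // mem_cat hy orbT.
Qed.

Lemma FT_av T : av132 (FT T).
Proof.
elim/ptree_ind2: T => [|ts S IHT IHS].
  by move=> a b c _ _; rewrite FT_nil.
rewrite FT_rcons edges_rcons; apply: av_cat => //.
- move=> x y /mapP[x' hx' ->] hy.
  have := mem_FT hx'; have := mem_FT hy; lia.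
- move=> x /mapP[x' hx' ->]; have := mem_FT hx'; lia.
- move=> y hy; have := mem_FT hy; lia.
- by apply/av_map.
Qed.

Definition children (T : ptree) := let: Node ts := T in ts.

Fixpoint Gf (k : nat) (s : seq nat) : ptree :=
  if k is k'.+1 then
    if s is [::] then Node [::] else
    let i := index (size s) s in
    let B := drop i.+1 s in
    Node (rcons (children (Gf k' B)) (Gf k' (map (subn^~ (size B)) (take i s))))
  else Node [::].

Lemma Gf_cons k s : s != [::] -> Gf k.+1 s =
    Node (rcons (children (Gf k (drop (index (size s) s).+1 s)))
      (Gf k (map (subn^~ (size (drop (index (size s) s).+1 s))) (take (index (size s) s) s)))).
Proof. by case: s. Qed.

Lemma Gf_FT k T : edges T < k -> Gf k (FT T) = T.
Proof.
elim/ptree_ind2: T k => [|ts S IHT IHS] [|k] //.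
rewrite edges_rcons ltnS => hk.
set A := map (addn (edges (Node ts))) (FT S).
have hA : edges (Node (rcons ts S)) \notin A.
  apply/negP => /mapP[x hx]; have := mem_FT hx; rewrite edges_rcons; lia.
rewrite FT_rcons -/A.
set e := edges (Node (rcons ts S)).
have hsz : size (A ++ e :: FT (Node ts)) = e.
  rewrite size_cat size_map size_FT /e edges_rcons [size (_ :: _)]/= size_FT; lia.
rewrite Gf_cons; last by rewrite -size_eq0 hsz /e edges_rcons.
rewrite hsz index_cat (negbTE hA) (_ : index e (e :: FT (Node ts)) = 0); last by rewrite /= eqxx.
rewrite addn0 take_size_cat // drop_cat ltnNge leqnSn /= subSnn drop1 [behead _]/= size_FT.
rewrite IHT; last lia.
rewrite /A -map_comp (eq_map (g := id)) ?map_id; last by move=> x /=; rewrite addKn.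
by rewrite IHS //; lia.
Qed.

Ltac clean_lia := repeat match goal with H : ?T |- _ => (match type of T with Prop => clear H end) end; lia.

Lemma perm_iota_of (s : seq nat) : uniq s -> (forall x, x \in s -> 0 < x <= size s) ->
  perm_eq s (iota 1 (size s)).
Proof.
move=> U H; apply: uniq_perm => //; first exact: iota_uniq.
have [] := uniq_min_size U (s2 := iota 1 (size s)) _ _ => //.
- move=> x /H; rewrite mem_iota; lia.
- by rewrite size_iota.
Qed.

Lemma Gf_ok k s : size s < k -> perm_eq s (iota 1 (size s)) -> av132 s ->
  edges (Gf k s) = size s /\ FT (Gf k s) = s.
Proof.
elim: k s => [|k IH] s // hk hp hav.
have [->|hne] := eqVneq s [::]; first by [].
rewrite Gf_cons //.
have U : uniq s by rewrite (perm_uniq hp) iota_uniq.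
have Hmem x : x \in s -> 0 < x <= size s by rewrite (perm_mem hp) mem_iota; lia.
have hs0 : 0 < size s by rewrite lt0n size_eq0.
have hn : size s \in s by rewrite (perm_mem hp) mem_iota; lia.
set i := index (size s) s; set A := take i s; set B := drop i.+1 s.
have Hs : s = A ++ size s :: B.
  by rewrite /A /B -{1}(cat_take_drop i s) (drop_nth 0) ?index_mem // nth_index.
have hsz : size s = size A + (size B).+1 by rewrite {1}Hs size_cat.
have U' : uniq (A ++ size s :: B) by rewrite -Hs.
have hav' : av132 (A ++ size s :: B) by rewrite -Hs.
have HinS z : z \in A ++ B -> z \in s.
  by rewrite {1}Hs !mem_cat inE => /orP[->|->]; rewrite ?orbT.
have hnAB : size s \notin A ++ B.
  move: U'; rewrite cat_uniq => /and3P[_ /hasPn H1 /andP[H2 _]].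
  rewrite mem_cat negb_or H2 andbT; apply/negP => hA.
  by have := H1 (size s); rewrite inE eqxx hA => /(_ isT).
have HAB z : z \in A ++ B -> z < size s.
  move=> hz; have := Hmem z (HinS z hz).
  case: (eqVneq z (size s)) => [e|ne]; last by move: ne; clean_lia.
  by move: hnAB; rewrite -e hz.
have Hlt := av_split U' HAB hav'.
have [avA avB] := av_catE hav'.
have uA : uniq A by move: U'; rewrite cat_uniq => /and3P[].
have uB : uniq B by move: U'; rewrite cat_uniq => /and3P[_ _ /andP[]].
have hB : perm_eq B (iota 1 (size B)).
  apply: perm_iota_of => // y hy.
  have hyS : y \in A ++ B by rewrite mem_cat hy orbT.
  have := Hmem y (HinS y hyS); move/andP => [-> _] /=.
  apply: contraT; rewrite -ltnNge => hyB.
  have : size (iota 1 y) <= size B.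
    apply: uniq_leq_size; first exact: iota_uniq.
    move=> z; rewrite mem_iota => hz.
    have hzs : z \in s by rewrite (perm_mem hp) mem_iota; have := HAB y hyS; move: hz; clean_lia.
    move: hzs; rewrite {1}Hs mem_cat inE => /or3P[hzA|/eqP hzn|//].
    - have := Hlt z y hzA hy; move: hz; clean_lia.
    - have := HAB y hyS; move: hz hzn; clean_lia.
  by rewrite size_iota leqNgt hyB.
have HA x : x \in A -> size B < x < size s.
  move=> hx; have hxS : x \in A ++ B by rewrite mem_cat hx.
  rewrite (HAB x hxS) andbT ltnNge; apply/negP => hle.
  have : x \in B by rewrite (perm_mem hB) mem_iota; have := Hmem x (HinS x hxS); move: hle; clean_lia.
  by move/(Hlt x x hx); rewrite ltnn.
set A' := map (subn^~ (size B)) A.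
have hA' : map (addn (size B)) A' = A.
  rewrite -map_comp; apply: map_id_in => x hx /=; rewrite subnKC //.
  by case/andP: (HA x hx) => /ltnW.
have uA' : uniq A'.
  rewrite /A' map_inj_in_uniq // => x y hx hy /= e.
  case/andP: (HA x hx) => /ltnW h1 _; case/andP: (HA y hy) => /ltnW h2 _.
  by rewrite -(subnK h1) e subnK.
have pA' : perm_eq A' (iota 1 (size A')).
  apply: perm_iota_of => // z /mapP[x hx ->]; rewrite /A' size_map.
  have := HA x hx; move: hsz; set sA := size A; set sB := size B; set sS := size s; clean_lia.
have avA' : av132 A' by apply/(av_map (size B)); rewrite hA'.
have hkB : size B < k by move: hsz hk; set sA := size A; set sB := size B; set sS := size s; clean_lia.
have hkA : size A' < k by rewrite /A' size_map; move: hsz hk; set sA := size A; set sB := size B; set sS := size s; clean_lia.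
have [eB fB] := IH B hkB hB avB.
have [eA fA] := IH A' hkA pA' avA'.
have hT : Node (children (Gf k B)) = Gf k B by case: (Gf k B).
rewrite FT_rcons edges_rcons hT eB eA fB fA hA' /A' size_map.
have -> : (size B + size A).+1 = size s by move: hsz; set sA := size A; set sB := size B; set sS := size s; clean_lia.
by split; last exact: esym Hs.
Qed.

Lemma size_oneline n (p : 'S_n) : size (oneline p) = n.
Proof. by rewrite /oneline size_map size_enum_ord. Qed.

Lemma oneline_nth n (p : 'S_n) (i : 'I_n) : nth 0 (oneline p) i = (p i).+1.
Proof.
rewrite /oneline (nth_map i) ?size_enum_ord //.
by rewrite nth_ord_enum.
Qed.

Lemma oneline_perm n (p : 'S_n) : perm_eq (oneline p) (iota 1 n).
Proof.
rewrite -{2}(size_oneline p); apply: perm_iota_of.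
  rewrite map_inj_uniq ?enum_uniq // => i j /succn_inj /val_inj; exact: perm_inj.
move=> x /mapP[i _ ->]; rewrite size_oneline; exact: ltn_ord.
Qed.

Lemma oneline_av n (p : 'S_n) : avoids132 p -> av132 (oneline p).
Proof.
move=> H a b c hab hbc hc; rewrite size_oneline in hc.
have ha : a < n by lia. have hb : b < n by lia.
rewrite (oneline_nth p (Ordinal ha)) (oneline_nth p (Ordinal hb)) (oneline_nth p (Ordinal hc)) !ltnS.
apply/negP => Hc; move/negP: H; apply.
apply/existsP; exists (Ordinal ha); apply/existsP; exists (Ordinal hb);
  apply/existsP; exists (Ordinal hc).
by rewrite /= hab hbc.
Qed.

Lemma av_oneline n (p : 'S_n) : av132 (oneline p) -> avoids132 p.
Proof.
move=> H; apply/negP; case/existsP => a /existsP [b /existsP [c /and4P [hab hbc h1 h2]]].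
have := H a b c hab hbc; rewrite size_oneline ltn_ord !oneline_nth !ltnS h1 h2.
by move/(_ isT).
Qed.

Lemma oneline_inj n (p q : 'S_n) : oneline p = oneline q -> p = q.
Proof.
move=> e; apply/permP => i; apply: val_inj; apply: succn_inj.
by rewrite -!oneline_nth e.
Qed.

Lemma perm_of_seq n (s : seq nat) : perm_eq s (iota 1 n) -> {p : 'S_n | oneline p = s}.
Proof.
move=> hp.
have U : uniq s by rewrite (perm_uniq hp) iota_uniq.
have Hs : size s = n by rewrite (perm_size hp) size_iota.
have Hm x : x \in s -> 0 < x <= n by rewrite (perm_mem hp) mem_iota; lia.
have Hin (i : nat) : i < n -> nth 0 s i \in s by move=> h; apply: mem_nth; rewrite Hs.
have Hb (i : 'I_n) : (nth 0 s i).-1 < n.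
  have := Hm _ (Hin _ (ltn_ord i)); lia.
pose f (i : 'I_n) : 'I_n := Ordinal (Hb i).
have finj : injective f.
  move=> i j [] e; apply: val_inj.
  have hi := Hm _ (Hin _ (ltn_ord i)).
  have hj := Hm _ (Hin _ (ltn_ord j)).
  apply/eqP; rewrite -(nth_uniq 0 _ _ U) ?Hs ?ltn_ord //; apply/eqP.
  rewrite -[val i]/(nat_of_ord i) -[val j]/(nat_of_ord j).
  move: e hi hj; set x := nth 0 s i; set y := nth 0 s j; lia.
exists (perm finj).
apply: (eq_from_nth (x0 := 0)); first by rewrite size_oneline.
move=> i; rewrite size_oneline => hi.
rewrite (oneline_nth _ (Ordinal hi)) permE /=.
have := Hm _ (Hin _ hi); lia.
Qed.

Lemma sig_edges_eq n (T1 T2 : {T : ptree | edges T = n}) : sval T1 = sval T2 -> T1 = T2.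
Proof.
case: T1 T2 => [x hx] [y hy] /= e; subst y.
by rewrite (eq_irrelevance hx hy).
Qed.

Lemma sig_perm_eq n (p q : {p : 'S_n | avoids132 p}) : sval p = sval q -> p = q.
Proof.
case: p q => [x hx] [y hy] /= e; subst y.
by rewrite (bool_irrelevance hx hy).
Qed.

Definition GT (s : seq nat) := Gf (size s).+1 s.

Lemma hpT n (T : {T : ptree | edges T = n}) : perm_eq (FT (sval T)) (iota 1 n).
Proof. by have := FT_perm (sval T); rewrite (svalP T). Qed.

Lemma havT n (T : {T : ptree | edges T = n}) : avoids132 (sval (perm_of_seq (hpT T))).
Proof. by apply: av_oneline; rewrite (svalP (perm_of_seq (hpT T))); exact: FT_av. Qed.

Definition psi n (T : {T : ptree | edges T = n}) : {p : 'S_n | avoids132 p} :=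
  exist _ (sval (perm_of_seq (hpT T))) (havT T).

Lemma psiE n (T : {T : ptree | edges T = n}) : oneline (sval (psi T)) = FT (sval T).
Proof. exact: (svalP (perm_of_seq (hpT T))). Qed.

Lemma hG n (p : {p : 'S_n | avoids132 p}) :
    edges (GT (oneline (sval p))) = size (oneline (sval p)) /\ FT (GT (oneline (sval p))) = oneline (sval p).
Proof.
apply: Gf_ok => //; rewrite ?size_oneline; first exact: oneline_perm.
exact: oneline_av (svalP p).
Qed.

Lemma hphi n (p : {p : 'S_n | avoids132 p}) : edges (GT (oneline (sval p))) = n.
Proof. by rewrite (hG p).1 size_oneline. Qed.

Definition phi n (p : {p : 'S_n | avoids132 p}) : {T : ptree | edges T = n} :=
  exist _ (GT (oneline (sval p))) (hphi p).

Lemma phiE n (p : {p : 'S_n | avoids132 p}) : sval (phi p) = GT (oneline (sval p)).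
Proof. by []. Qed.

Theorem mainTheorem11 (n : nat) (hn : 1 <= n) :
  exists psi : {T : ptree | edges T = n} -> {p : 'S_n | avoids132 p},
    bijective psi /\
    forall T : {T : ptree | edges T = n},
      young_leaves (proj1_sig T) = ddes (n.+1 :: oneline (proj1_sig (psi T))) /\
      old_leaves (proj1_sig T) = asc_runs (rcons (oneline (proj1_sig (psi T))) n.+1).
Proof.
exists (@psi n); split.
  exists (@phi n).
    move=> T; apply: sig_edges_eq.
    rewrite phiE psiE /GT Gf_FT // size_FT; lia.
  move=> p; apply: sig_perm_eq; apply: oneline_inj.
  by rewrite psiE phiE (hG p).2.
move=> T; rewrite psiE ddesE asc_runsE.
have hT := svalP T.
split.
  apply: FT_young; rewrite hT; lia.
apply: FT_old; rewrite hT; lia.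
Qed.
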